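(* Consider the discrete-time nonlinear system $x^+=AM(x)+Bu$ with (unknown) $A\in\mathbb{R}^{n\times N}$, $B\in\mathbb{R}^{n\times m}$, $M(x)=\begin{bmatrix}x\\ \mathcal{Z}(x)\end{bmatrix}\in\mathbb{R}^N$, $\mathcal{Z}:\mathbb{R}^n\to\mathbb{R}^{N-n}$. Let $\mathcal{U}_0=[u(0),\dots,u(T-1)]$, $\mathcal{X}_1=[x(1),\dots,x(T)]$ and $\mathcal{M}_0=[M(x(0)),\dots,M(x(T-1))]$ be built from a single trajectory $x(t+1)=AM(x(t))+Bu(t)$, with $\mathcal{M}_0$ of full row rank, and let $Q=[Q_1~Q_2]\in\mathbb{R}^{T\times N}$ ($Q_1\in\mathbb{R}^{T\times n}$, $Q_2\in\mathbb{R}^{T\times(N-n)}$) satisfy $\mathcal{M}_0Q=\mathbb{I}_N$. Under the controller $u=\mathcal{U}_0QM(x)$, if the nonlinearity cancellation condition $\mathcal{X}_1Q_2=\mathbf{0}_{n\times(N-n)}$ holds, then for every $k\in\mathbb{N}_{>0}$ the state after $k$ steps of the closed-loop system is $x^{k+}=(\mathcal{X}_1Q_1)^kx$.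
   Context: $\mathbb{I}_N$ is the identity, $\mathbf{0}_{n\times(N-n)}$ the zero matrix; $x^{k+}$ denotes the state reached from $x$ after $k$ iterations of the closed-loop dynamics. *)

(* Defs.v *)
From mathcomp Require Import all_boot all_order all_algebra.
Set Implicit Arguments. Unset Strict Implicit. Unset Printing Implicit Defensive.
Import GRing.Theory Num.Theory.
Local Open Scope ring_scope.

Definition liftM (R : pzRingType) (n p : nat) (Z : 'cV[R]_n -> 'cV[R]_p)
  (x : 'cV[R]_n) : 'cV[R]_(n + p) := col_mx x (Z x).

Definition closed_loop (R : pzRingType) (n p m T : nat)
  (A : 'M[R]_(n, n + p)) (B : 'M[R]_(n, m)) (Z : 'cV[R]_n -> 'cV[R]_p)
  (U0 : 'M[R]_(m, T)) (Q : 'M[R]_(T, n + p)) (x : 'cV[R]_n) : 'cV[R]_n :=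
  A *m liftM Z x + B *m (U0 *m Q *m liftM Z x).

(* Main.v *)
Require Import Defs.
From mathcomp Require Import all_boot all_order all_algebra.
Import GRing.Theory Num.Theory.
Local Open Scope ring_scope.

Theorem lemma3 (R : realFieldType) (n p m T : nat)
  (A : 'M[R]_(n, n + p)) (B : 'M[R]_(n, m)) (Z : 'cV[R]_n -> 'cV[R]_p)
  (xs : nat -> 'cV[R]_n) (us : nat -> 'cV[R]_m)
  (Htraj : forall t : nat, xs t.+1 = A *m liftM Z (xs t) + B *m us t)
  (U0 : 'M[R]_(m, T)) (X1 : 'M[R]_(n, T)) (M0 : 'M[R]_(n + p, T))
  (HU0 : forall t : 'I_T, col t U0 = us t)
  (HX1 : forall t : 'I_T, col t X1 = xs t.+1)
  (HM0 : forall t : 'I_T, col t M0 = liftM Z (xs t))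
  (Hrank : \rank M0 = (n + p)%N)
  (Q : 'M[R]_(T, n + p))
  (HQ : M0 *m Q = 1%:M)
  (Hcancel : X1 *m rsubmx Q = 0) :
  forall (k : nat) (x : 'cV[R]_n), (0 < k)%N ->
    iter k (closed_loop A B Z U0 Q) x = (X1 *m lsubmx Q) ^+ k *m x.
Proof.
have HX : X1 = A *m M0 + B *m U0.
  apply/matrixP => i j.
  have := HX1 j; rewrite Htraj -HM0 -HU0 !colE !mulmxA -mulmxDl -!colE.
  by move=> /(congr1 (fun M : 'cV[R]_n => M i 0)); rewrite !mxE.
have Hstep : forall x, closed_loop A B Z U0 Q x = X1 *m lsubmx Q *m x.
  move=> x; rewrite /closed_loop.
  have -> : A *m liftM Z x + B *m (U0 *m Q *m liftM Z x)
            = X1 *m (Q *m liftM Z x).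
    by rewrite HX mulmxDl !mulmxA -(mulmxA A M0 Q) HQ mulmx1.
  rewrite -[Q]hsubmxK /liftM mul_row_col mulmxDr mulmxA (mulmxA X1 (rsubmx Q)).
  by rewrite ?row_mxKl ?row_mxKr Hcancel mul0mx addr0.
move=> k x _; elim: k => [|k IH]; first by rewrite /= expr0 mul1mx.
by rewrite iterS IH Hstep exprS mulmxA.
Qed.
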